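(* Fix $k\in\mathbb{Z}_{\ge0}$. Let $\{K(\alpha)\}_{\alpha\in\mathfrak{c}\cup\{\mathfrak{c}\}}$ be a family of pairwise disjoint ubiquitously dense subsets of $[0,\infty)$, each of cardinality $\mathfrak{c}$, and for each $\alpha$ let $R(\alpha)$ be a $K(\alpha)$-gauge system on $\Omega$. Let $\mathbb{F}_{k,\alpha}=\{\tilde\Lambda^k[R(\alpha)](x,y)\mid x,y\in N(\Omega),\ x\neq y\}$. Then the set $\{1\}\cup\bigcup_{\alpha\in\mathfrak{c}\cup\{\mathfrak{c}\}}\mathbb{F}_{k,\alpha}$ is linearly independent over $\mathbb{Q}$ (i.e., every finite collection of distinct elements of it is linearly independent over $\mathbb{Q}$).
   Context: $\mathfrak{c}\cup\{\mathfrak{c}\}$ is the ordinal successor of $\mathfrak{c}$. A subset $S$ of $[0,\infty)$ is ubiquitously dense if $\operatorname{card}(U\cap S)=\operatorname{card}(S)$ for every non-empty open $U\subseteq[0,\infty)$. Fix a bijection $Q\colon\mathbb{Z}_{\ge0}\to\mathbb{Q}_{\ge0}$ with property (M): setting $\mu_m=\min Q^{-1}([m,m+1)\cap\mathbb{Q})$, we have $Q(\mu_m)=m$ and $\mu_m<\mu_{m+1}$ for all $m$. For a summable sequence $\alpha=(a_i)$ of positive reals and $B\subseteq\mathbb{Q}_{\ge0}$, $\langle\alpha,B\rangle=\sum_{i:\,Q(i)\in B}a_i$ ($=0$ if $B=\emptyset$). For $k\in\mathbb{Z}_{\ge0}$ let $F_k(n)=2^n+k$ and $\lambda^k_i=2^{-F_k(i)}$,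 $\lambda^k=(\lambda^k_i)_{i\ge0}$. $\Omega$ is a discrete space of cardinality $\mathfrak{c}$ and $N(\Omega)=\Omega^{\mathbb{Z}_{\ge0}}$ with the product topology. For $T\subseteq[0,\infty)$, a $T$-semi-metric on a set $Y$ is a symmetric map $r\colon Y\times Y\to[0,\infty)$ with $r(x,y)=0$ iff $x=y$ and $r(x,y)\in T$ for $x\ne y$; it is strongly rigid if $r(x,y)=r(u,v)\neq0$ implies $\{x,y\}=\{u,v\}$. For dense $S\subseteq[0,\infty)$, an $S$-gauge system on $\Omega$ is a sequence $(r_i)_{i\ge0}$ with each $r_i$ a strongly rigid $(S\cap(i,i+1))$-semi-metric on $\Omega$. Put $J(m,t)=[m,t)\cap\mathbb{Q}$, $\Lambda^k_m[r](a,b)=\langle\lambda^k,J(m,r(a,b))\rangle$ for $a,b\in\Omega$, and for $x=(x_i),y=(y_i)\in N(\Omega)$, $\Lambda^k[R](x,y)=\sum_{m\ge0}\Lambda^k_m[r_m](x_m,y_m)=\langle\lambda^k,\bigsqcup_{m\ge0}J(m,r_m(x_m,y_m))\rangle$. For each $n\in\mathbb{Z}_{\ge0}$ fix an injective map $f_n\colon\Omega^{n+1}\to\Omega$, and define $\Phi\colon N(\Omega)\to N(\Omega)$ by $\Phi(x)_{2n}=x_n$, $\Phi(x)_{2n+1}=f_n(x_0,\dots,x_n)$. Finally $\tilde\Lambda^k[R](x,y)=\Lambda^k[R](\Phi(x),\Phi(y))$. *)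

(* Defs.v *)
From HB Require Import structures.
From mathcomp Require Import all_boot all_order all_algebra.
From mathcomp Require Import all_classical all_reals all_analysis.
Set Implicit Arguments. Unset Strict Implicit. Unset Printing Implicit Defensive.
Import Order.TTheory GRing.Theory Num.Theory.
Import numFieldNormedType.Exports.
Local Open Scope classical_set_scope.
Local Open Scope ring_scope.

Section Defs.
Variable R : realType.

Definition Qenum (Q : nat -> rat) : Prop :=
  injective Q /\ (forall i, 0 <= Q i) /\ (forall q : rat, 0 <= q -> exists i, Q i = q).

Definition propM (Q : nat -> rat) : Prop :=
  exists mu : nat -> nat,
    (forall m, (m%:R <= Q (mu m) < m.+1%:R) /\
               (forall i, m%:R <= Q i < m.+1%:R -> (mu m <= i)%N)) /\
    (forall m, Q (mu m) = m%:R) /\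
    (forall m, (mu m < mu m.+1)%N).

(* <alpha, B> = sum_{i : Q i \in B} a_i  (limit of partial sums; 0 if B empty) *)
Definition pair_sum (Q : nat -> rat) (a : nat -> R) (B : set rat) : R :=
  \big[+%R/0%R]_(0 <= i <oo | `[< B (Q i) >]) a i.

Definition lam (k : nat) : nat -> R := fun i => (2%:R : R) ^- (2 ^ i + k)%N.

Definition J (m : nat) (t : R) : set rat := [set q : rat | m%:R <= ratr q :> R /\ ratr q < t].

Definition semi_metric (Y : Type) (T : set R) (r : Y -> Y -> R) : Prop :=
  (forall x y, r x y = r y x) /\
  (forall x y, r x y = 0 <-> x = y) /\
  (forall x y, x <> y -> T (r x y)).

Definition strongly_rigid (Y : Type) (r : Y -> Y -> R) : Prop :=
  forall x y u v, r x y = r u v -> r x y <> 0 -> (x = u /\ y = v) \/ (x = v /\ y = u).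

Definition gauge_system (Omega : Type) (S : set R) (rs : nat -> Omega -> Omega -> R) : Prop :=
  forall i : nat, semi_metric (S `&` `]i%:R, i.+1%:R[) (rs i) /\ strongly_rigid (rs i).

Definition ubiq_dense (S : set R) : Prop :=
  S `<=` `[0, +oo[ /\
  forall V : set R, open V -> V `&` `[0, +oo[ !=set0 ->
    ((V `&` `[0, +oo[) `&` S #= S)%card.

Definition Lambda (Omega : Type) (Q : nat -> rat) (k : nat)
    (rs : nat -> Omega -> Omega -> R) (x y : nat -> Omega) : R :=
  pair_sum Q (lam k) (\bigcup_(m in [set: nat]) J m (rs m (x m) (y m))).

Definition Phi (Omega : Type) (f : forall n : nat, ('I_n.+1 -> Omega) -> Omega)
    (x : nat -> Omega) : nat -> Omega :=
  fun j => if odd j then f j./2 (fun i : 'I_(j./2).+1 => x (nat_of_ord i)) else x j./2.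

Definition Lambda_tilde (Omega : Type) (Q : nat -> rat) (f : forall n : nat, ('I_n.+1 -> Omega) -> Omega)
    (k : nat) (rs : nat -> Omega -> Omega -> R) (x y : nat -> Omega) : R :=
  Lambda Q k rs (Phi f x) (Phi f y).

Definition Fset (Omega : Type) (Q : nat -> rat) (f : forall n : nat, ('I_n.+1 -> Omega) -> Omega)
    (k : nat) (rs : nat -> Omega -> Omega -> R) : set R :=
  [set t | exists x y : nat -> Omega, x <> y /\ t = Lambda_tilde Q f k rs x y].

Definition Q_lin_indep (X : set R) : Prop :=
  forall (s : seq R) (c : R -> rat), uniq s -> (forall x, x \in s -> X x) ->
    \sum_(x <- s) ratr (c x) * x = 0 -> forall x, x \in s -> c x = 0.

End Defs.

(* Main.v *)
Require Import Defs.
From HB Require Import structures.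
From mathcomp Require Import all_boot all_order all_algebra.
From mathcomp Require Import all_classical all_reals all_analysis.
From Stdlib Require Import Lia.
From mathcomp Require Import zify ring lra.
Import Order.TTheory GRing.Theory Num.Theory.
Import numFieldNormedType.Exports.
Local Open Scope classical_set_scope.
Local Open Scope ring_scope.

Section Analytic.
Variable R : realType.

Lemma lamE k i : lam R k i = ((2:R) ^+ (2 ^ i + k))^-1.
Proof. by []. Qed.

Lemma lam_gt0 k i : 0 < lam R k i.
Proof. by rewrite lamE invr_gt0 exprn_gt0. Qed.

Lemma lam_step k i : 2 * lam R k i.+1 <= lam R k i.
Proof.
rewrite !lamE.
have -> : ((2:R) ^+ (2 ^ i + k))^-1 = 2 * ((2:R) ^+ (2 ^ i + k).+1)^-1.
  by rewrite exprS invfM mulrA divff ?mul1r // pnatr_eq0.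
rewrite ler_pM2l // lef_pV2 ?posrE ?exprn_gt0 //.
rewrite ler_eXn2l // ?ltr1n //.
rewrite expnS; have := expn_gt0 2 i; lia.
Qed.

Lemma lam_tail_aux k l : forall j, \sum_(j <= i < j + l) lam R k i <= 2 * lam R k j.
Proof.
elim: l => [|l IH] j.
  by rewrite addn0 big_geq // mulr_ge0 // ltW // lam_gt0.
rewrite big_ltn; last by rewrite addnS ltnS leq_addr.
rewrite addnS -addSn.
apply: le_trans (lerD (lexx _) (IH j.+1)) _.
have h := lam_step k j.
have -> : 2 * lam R k j = lam R k j + lam R k j by rewrite mulrDl mul1r.
by rewrite lerD2l.
Qed.

Lemma lam_tail k j n : \sum_(j <= i < n) lam R k i <= 2 * lam R k j.
Proof.
case: (leqP j n) => h.
  by rewrite -(subnKC h) lam_tail_aux.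
by rewrite big_geq ?(ltnW h) // mulr_ge0 // ltW // lam_gt0.
Qed.

Lemma lam_int k i j : (i <= j)%N -> (2:R) ^+ (2 ^ j + k) * lam R k i \is a Num.int.
Proof.
move=> hij; rewrite lamE.
have hle : (2 ^ i + k <= 2 ^ j + k)%N by rewrite leq_add2r leq_pexp2l.
rewrite -(subnK hle) exprD -mulrA divff ?mulr1 ?expf_neq0 ?pnatr_eq0 //.
by rewrite -natrX intr_nat // natr_nat.
Qed.

Lemma gap_lemma k (d : nat -> R) (c1 D B : R) :
  0 < D -> D * c1 \is a Num.int -> (forall i, D * d i \is a Num.int) ->
  (forall i, `|d i| <= B) ->
  cvgn (fun n => \sum_(0 <= i < n) d i * lam R k i) ->
  c1 + limn (fun n => \sum_(0 <= i < n) d i * lam R k i) = 0 ->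
  exists N, forall j, (N <= j)%N -> d j = 0.
Proof.
move=> D0 Dc1 Dd dB cG hL.
set G := fun n => \sum_(0 <= i < n) d i * lam R k i.
set L := limn G.
have B0 : 0 <= B by apply: le_trans (dB 0%N).
have tailb : forall j n, (j <= n)%N -> `|G n - G j| <= 2 * B * lam R k j.
  move=> j n hjn.
  rewrite /G (big_cat_nat (leq0n j) hjn) /= addrC addrK.
  apply: le_trans (ler_norm_sum _ _ _) _.
  apply: (@le_trans _ _ (\sum_(j <= i < n) B * lam R k i)).
    apply: ler_sum => i _; rewrite normrM (ger0_norm (ltW (lam_gt0 k i))).
    by rewrite ler_wpM2r // ltW // lam_gt0.
  by rewrite -mulr_sumr [2 * B]mulrC -mulrA ler_wpM2l // lam_tail.
have limb : forall j, `|G j - L| <= 2 * B * lam R k j.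
  move=> j; rewrite distrC ler_distl; apply/andP; split.
    apply: limr_ge => //; near=> n.
    have /(tailb j n) : (j <= n)%N by near: n; exact: nbhs_infty_ge.
    by rewrite ler_distl => /andP[].
  apply: limr_le => //; near=> n.
  have /(tailb j n) : (j <= n)%N by near: n; exact: nbhs_infty_ge.
  by rewrite ler_distl => /andP[].
have [b0 hb] : exists b : nat, 2 * B * D < b%:R.
  by exists (Num.Def.archi_bound (2 * B * D)); apply: archi_boundP; rewrite !mulr_ge0 // ltW.
have key : forall j, (b0 <= j)%N -> c1 + G j.+1 = 0.
  move=> j hj.
  set M := (2:R) ^+ (2 ^ j + k).
  have M0 : 0 < M by rewrite exprn_gt0.
  have Zint : D * M * (c1 + G j.+1) \is a Num.int.
    rewrite mulrDr; apply: rpredD.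
      by rewrite mulrAC rpredM // /M -natrX intr_nat // natr_nat.
    rewrite /G big_mkord mulr_sumr; apply: rpred_sum => i _.
    rewrite mulrACA; apply: rpredM => //.
    by apply: lam_int; rewrite -ltnS ltn_ord.
  have ML : M * lam R k j.+1 = ((2:R) ^+ (2 ^ j))^-1.
    rewrite lamE /M.
    have -> : (2 ^ j.+1 + k = 2 ^ j + (2 ^ j + k))%N by rewrite expnS; lia.
    by rewrite [X in _ / X]exprD invfM mulrCA divff ?mulr1 // expf_neq0 // pnatr_eq0.
  have Zlt : `|D * M * (c1 + G j.+1)| < 1.
    have -> : c1 + G j.+1 = G j.+1 - L by move: hL; rewrite -/G -/L; lra.
    rewrite normrM (gtr0_norm (mulr_gt0 D0 M0)).
    apply: le_lt_trans (ler_wpM2l (ltW (mulr_gt0 D0 M0)) (limb j.+1)) _.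
    have -> : D * M * (2 * B * lam R k j.+1) = 2 * B * D * (M * lam R k j.+1) by ring.
    rewrite ML ltr_pdivrMr ?exprn_gt0 // mul1r.
    apply: lt_le_trans hb _.
    rewrite -natrX ler_nat.
    apply: (leq_trans hj); apply: ltnW; apply: (ltn_trans (ltn_expl j (ltnSn 1))).
    exact: ltn_expl.
  have Z0 : D * M * (c1 + G j.+1) = 0.
    apply/eqP; apply: contraT => hne.
    by have := norm_intr_ge1 Zint hne; rewrite leNgt Zlt.
  move/eqP: Z0; rewrite mulf_eq0 => /orP[|/eqP //].
  by rewrite mulf_eq0 (gt_eqF D0) (gt_eqF M0).
exists b0.+1 => j hj.
have e1 := key j (ltnW hj).
have jpos : (0 < j)%N by apply: leq_trans hj.
have e2 : c1 + G j = 0.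
  by rewrite -(prednK jpos); apply: key; rewrite -ltnS (prednK jpos).
have hGS : G j.+1 = G j + d j * lam R k j by rewrite /G big_nat_recr.
have : d j * lam R k j = 0 by move: e1 e2 hGS; lra.
by move/eqP; rewrite mulf_eq0 (gt_eqF (lam_gt0 k j)) orbF => /eqP.
Unshelve. all: by end_near.
Qed.
End Analytic.


Section Gen.
Variable R : realType.

Lemma fin_eventually (T : eqType) (r : seq T) (P : T -> nat -> Prop) :
  (forall y, y \in r -> exists N, forall n, (N <= n)%N -> P y n) ->
  exists N, forall n, (N <= n)%N -> forall y, y \in r -> P y n.
Proof.
elim: r => [|z r IH] h; first by exists 0%N => n _ y.
have [N1 h1] := h z (mem_head _ _).
have [|N2 h2] := IH; first by move=> y hy; apply: h; rewrite in_cons hy orbT.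
exists (maxn N1 N2) => n hn y; rewrite in_cons => /orP[/eqP->|hy].
  by apply: h1; exact: leq_trans (leq_maxl _ _) hn.
by apply: h2 => //; exact: leq_trans (leq_maxr _ _) hn.
Qed.

Lemma delta_exists (T : eqType) (r : seq T) (F : T -> R) (P : pred T) (tau : R) :
  (forall y, y \in r -> P y -> F y != tau) ->
  exists2 del, 0 < del & forall y, y \in r -> P y -> del <= `|F y - tau|.
Proof.
elim: r => [|z r IH] h; first by exists 1 => // y.
have [|del d0 hd] := IH; first by move=> y hy; apply: h; rewrite in_cons hy orbT.
case Pz: (P z).
  have hz : 0 < `|F z - tau| by rewrite normr_gt0 subr_eq0 h ?mem_head.
  exists (Num.min del `|F z - tau|); first by rewrite lt_min d0 hz.
  move=> y; rewrite in_cons => /orP[/eqP->|hy] Py; rewrite ge_min.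
    by rewrite lexx orbT.
  by rewrite hd.
exists del => // y; rewrite in_cons => /orP[/eqP->|hy] Py; last exact: hd.
by rewrite Pz in Py.
Qed.

Lemma block_mem (t : nat -> R) (m : nat) (q : rat) :
  (forall m', t m' = 0 \/ m'%:R < t m' < m'.+1%:R) ->
  (m%:R : R) <= (ratr q : R) < m.+1%:R ->
  ((\bigcup_(m' in setT) J m' (t m')) q <-> (ratr q : R) < t m).
Proof.
move=> ht /andP[hq1 hq2]; split; last by move=> h; exists m.
move=> [m' _ [h1 h2]].
case: (ht m') => [e|/andP[h3 h4]].
  by move: h2; rewrite e => /(le_lt_trans h1); rewrite ltNge ler0n.
have e1 : (m' < m.+1)%N by rewrite -(ltr_nat R); apply: le_lt_trans h1 hq2.
have e2 : (m < m'.+1)%N.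
  by rewrite -(ltr_nat R); apply: le_lt_trans hq1 (lt_trans h2 h4).
have -> : m = m' by lia.
exact: h2.
Qed.

Lemma psum_cvg (Q : nat -> rat) k (B : set rat) :
  cvgn (fun n => \sum_(0 <= i < n | `[< B (Q i) >]) lam R k i).
Proof.
apply: cvgP; apply: nondecreasing_cvgn.
  move=> n m hnm /=; rewrite (big_cat_nat (leq0n n) hnm) //= lerDl.
  by apply: sumr_ge0 => i _; exact: ltW (lam_gt0 _ _ _).
exists (2 * lam R k 0) => _ [n _ <-].
apply: le_trans (lam_tail R k 0 n).
rewrite [leLHS]big_mkcond /=; apply: ler_sum => i _.
by case: ifP => // _; exact: ltW (lam_gt0 _ _ _).
Qed.


End Gen.


Section Often.
Variable R : realType.

Definition Bset (t : nat -> R) : set rat := \bigcup_(m in setT) J m (t m).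

Lemma ratr_ge0 (q : rat) : 0 <= q -> 0 <= (ratr q : R).
Proof. by move=> h; have := ler_rat R 0 q; rewrite rmorph0 h. Qed.

Lemma ratr_ge0' (q : rat) : 0 <= (ratr q : R) -> 0 <= q.
Proof. by move=> h; have := ler_rat R 0 q; rewrite rmorph0 h. Qed.

Lemma nat_bound (Q : nat -> rat) N :
  exists m0 : nat, forall i, (i < N)%N -> (ratr (Q i) : R) < m0%:R.
Proof.
elim: N => [|N [m0 h]]; first by exists 0%N.
have hb := @archi_boundP R `|ratr (Q N)| (normr_ge0 _).
exists (maxn m0 (Num.Def.archi_bound `|(ratr (Q N) : R)|)) => i.
rewrite ltnS leq_eqVlt => /orP[/eqP->|hi].
  apply: le_lt_trans (ler_norm _) _; apply: lt_le_trans hb _.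
  by rewrite ler_nat leq_maxr.
by apply: lt_le_trans (h i hi) _; rewrite ler_nat leq_maxl.
Qed.

Lemma nonzero_often (others : seq R) (thr : R -> nat -> R) (Q : nat -> rat)
    (c : R -> rat) (y0 : R) :
  uniq others -> y0 \in others -> c y0 != 0 ->
  (forall q : rat, 0 <= q -> exists i, Q i = q) ->
  (forall y, y \in others -> forall m, thr y m = 0 \/ m%:R < thr y m < m.+1%:R) ->
  (forall M, exists m, (M <= m)%N /\ thr y0 m != 0 /\
     forall y, y \in others -> y != y0 -> thr y m != thr y0 m) ->
  forall N, exists2 j, (N <= j)%N &
    \sum_(y <- others) (ratr (c y) : R) * (`[< Bset (thr y) (Q j) >])%:R != 0.
Proof.
move=> uo hy0 cy0 Qsurj hP1 hP2 N.
have [m0 hm0] := nat_bound Q N.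
have [m [hm [h0 hsep]]] := hP2 m0.
set tau := thr y0 m.
have [e|/andP[tm1 tm2]] := hP1 y0 hy0 m; first by rewrite e eqxx in h0.
have [del d0 hd] := delta_exists R _ others (fun y => thr y m) (fun y => y != y0) tau
  (fun y hy hne => hsep y hy hne).
have hlo : Num.max (m%:R : R) (tau - del) < tau by rewrite gt_max tm1 /= gtrDl oppr_lt0.
have hhi : tau < Num.min (m.+1%:R : R) (tau + del) by rewrite lt_min tm2 /= ltrDl.
have [q1] := rat_in_itvoo hlo; rewrite in_itv /= gt_max => /andP[/andP[q1a q1b] q1c].
have [q2] := rat_in_itvoo hhi; rewrite in_itv /= lt_min => /andP[q2a /andP[q2b q2c]].
have mge0 : 0 <= (m%:R : R) by [].
have [i1 Qi1] := Qsurj q1 (ratr_ge0' _ (le_trans mge0 (ltW q1a))).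
have [i2 Qi2] := Qsurj q2 (ratr_ge0' _ (le_trans mge0 (ltW (lt_trans tm1 q2a)))).
have indE : forall (y : R) (j : nat), y \in others ->
    ((m%:R : R) <= (ratr (Q j) : R) < m.+1%:R) ->
    (`[< Bset (thr y) (Q j) >] = ((ratr (Q j) : R) < thr y m)).
  move=> y j hy hb; have hh := block_mem _ _ _ _ (hP1 y hy) hb; apply/asboolP/idP;
  [exact: (proj1 hh) | exact: (proj2 hh)].
have b1 : (m%:R : R) <= (ratr (Q i1) : R) < m.+1%:R.
  by rewrite Qi1 (ltW q1a) /= (lt_trans q1c tm2).
have b2 : (m%:R : R) <= (ratr (Q i2) : R) < m.+1%:R.
  by rewrite Qi2 (ltW (lt_trans tm1 q2a)) /= q2b.
set F := fun j => \sum_(y <- others) ratr (c y) * (`[< Bset (thr y) (Q j) >])%:R :> R.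
have diff : F i1 - F i2 = ratr (c y0).
  rewrite /F -sumrB (bigD1_seq y0) //= big1_seq.
    rewrite addr0 -mulrBr (indE _ _ hy0 b1) (indE _ _ hy0 b2) Qi1 Qi2 q1c.
    by rewrite ltNge (ltW q2a) /= subr0 mulr1.
  move=> y /andP[hne hy]; rewrite -mulrBr (indE _ _ hy b1) (indE _ _ hy b2) Qi1 Qi2.
  have := hd y hy hne.
  case: (lerP (thr y m) tau) => ht.
    move=> hdl.
    have f1 : ~~ ((ratr q1 : R) < thr y m) by rewrite -leNgt; move: hdl q1b; lra.
    have f2 : ~~ ((ratr q2 : R) < thr y m) by rewrite -leNgt; move: hdl q2a; lra.
    by rewrite (negbTE f1) (negbTE f2) subrr mulr0.
  move=> hdl.
  have f1 : ((ratr q1 : R) < thr y m) by move: hdl q1c; lra.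
  have f2 : ((ratr q2 : R) < thr y m) by move: hdl q2c; lra.
  by rewrite f1 f2 subrr mulr0.
have ge1 : forall i, (ratr (Q i) : R) >= m%:R -> (N <= i)%N.
  move=> i hi; rewrite leqNgt; apply/negP => hiN.
  have := hm0 i hiN; rewrite ltNge; move/negP; apply.
  by apply: le_trans hi; rewrite ler_nat.
have cy0' : (ratr (c y0) : R) != 0 by rewrite fmorph_eq0.
case: (eqVneq (F i1) 0) => hF1.
  exists i2; first by apply: ge1; case/andP: b2.
  apply/negP => /eqP hF2; move: diff; rewrite hF1 /F hF2 subrr => /esym/eqP.
  by rewrite (negbTE cy0').
by exists i1 => //; apply: ge1; case/andP: b1.
Qed.


End Often.


Section Gauge.
Variable R : realType.
Variable Omega : Type.
Variable f : forall n : nat, ('I_n.+1 -> Omega) -> Omega.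

Lemma Phi_odd (x : nat -> Omega) n : Phi f x (n.*2.+1) = f n (fun i : 'I_n.+1 => x i).
Proof.
rewrite /Phi /= odd_double /=.
have e : uphalf n.*2 = n by rewrite uphalf_double.
by move: (uphalf n.*2) e => j ->.
Qed.

Lemma thr_range (S : set R) (rs : nat -> Omega -> Omega -> R) :
  gauge_system S rs -> forall m x y, rs m x y = 0 \/ m%:R < rs m x y < m.+1%:R.
Proof.
move=> hgs m x y; have [[_ [h0 hT]] _] := hgs m.
case: (pselect (x = y)) => [->|hne]; first by left; apply/h0.
right; have [_] := hT x y hne; by rewrite /= in_itv /=.
Qed.

Lemma thr_K (S : set R) (rs : nat -> Omega -> Omega -> R) :
  gauge_system S rs -> forall m x y, rs m x y != 0 -> S (rs m x y).
Proof.
move=> hgs m x y hne; have [[_ [h0 hT]] _] := hgs m.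
case: (pselect (x = y)) => [e|hxy]; first by move: hne; rewrite e (proj2 (h0 y y)) ?eqxx.
by have [] := hT x y hxy.
Qed.

Lemma LT_sym Q k (S : set R) (rs : nat -> Omega -> Omega -> R) p q :
  gauge_system S rs -> Lambda_tilde Q f k rs p q = Lambda_tilde Q f k rs q p.
Proof.
move=> hgs; rewrite /Lambda_tilde /Lambda; congr pair_sum.
apply/funext => r; apply/propext; split => [[m _ h]|[m _ h]]; exists m => //;
  by have [[-> _] _] := hgs m.
Qed.



Variable I : Type.
Variable K : I -> set R.
Variable Rg : I -> nat -> Omega -> Omega -> R.

Definition tt (a : I) (p q : nat -> Omega) (m : nat) := Rg a m (Phi f p m) (Phi f q m).

Lemma sep_pair a0 a p0 q0 p q :
  (forall n, injective (f n)) ->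
  (forall a b, a <> b -> K a `&` K b = set0) ->
  (forall a, gauge_system (K a) (Rg a)) ->
  ~ (a = a0 /\ ((p = p0 /\ q = q0) \/ (p = q0 /\ q = p0))) ->
  exists N, forall n, (N <= n)%N -> tt a0 p0 q0 (n.*2.+1) != 0 ->
    tt a p q (n.*2.+1) != tt a0 p0 q0 (n.*2.+1).
Proof.
move=> hinj hdisj hgs hnot; apply: contrapT => H.
have often : forall N, exists n, (N <= n)%N /\ tt a0 p0 q0 (n.*2.+1) != 0 /\
    tt a p q (n.*2.+1) = tt a0 p0 q0 (n.*2.+1).
  move=> N; apply: contrapT => hno; apply: H; exists N => n hn h0.
  by apply/eqP => e; apply: hno; exists n.
have ha : a = a0.
  have [n [_ [h0 e]]] := often 0%N.
  case: (pselect (a = a0)) => // hne; exfalso.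
  have k0 := thr_K _ _ (hgs a0) _ _ _ h0.
  have k1 : K a (tt a0 p0 q0 n.*2.+1).
    by rewrite -e; apply: (thr_K _ _ (hgs a)); rewrite -/(tt a p q _) e.
  have : (K a `&` K a0) (tt a0 p0 q0 n.*2.+1) by split.
  by rewrite hdisj.
subst a.
have pref : forall n, tt a0 p0 q0 (n.*2.+1) != 0 ->
    tt a0 p q (n.*2.+1) = tt a0 p0 q0 (n.*2.+1) ->
    (forall i, (i <= n)%N -> p i = p0 i /\ q i = q0 i) \/
    (forall i, (i <= n)%N -> p i = q0 i /\ q i = p0 i).
  move=> n h0 e; have [_ rig] := hgs a0 (n.*2.+1).
  have hne : tt a0 p q n.*2.+1 <> 0 by rewrite e; exact/eqP.
  have := rig _ _ _ _ e hne; rewrite !Phi_odd => -[[e1 e2]|[e1 e2]]; [left|right] => i hi;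
    move/hinj: e1 => /(congr1 (fun g => g (Ordinal (hi : (i < n.+1)%N)))) /= ->;
    by move/hinj: e2 => /(congr1 (fun g => g (Ordinal (hi : (i < n.+1)%N)))) /= ->.
have [i1 hi1] : exists i1, ~ (p i1 = p0 i1 /\ q i1 = q0 i1).
  apply: contrapT => hno; apply: hnot; split => //; left.
  have hall : forall i, p i = p0 i /\ q i = q0 i.
    by move=> i; apply: contrapT => hn; apply: hno; exists i.
  by split; apply/funext => i; case: (hall i).
have [i2 hi2] : exists i2, ~ (p i2 = q0 i2 /\ q i2 = p0 i2).
  apply: contrapT => hno; apply: hnot; split => //; right.
  have hall : forall i, p i = q0 i /\ q i = p0 i.
    by move=> i; apply: contrapT => hn; apply: hno; exists i.
  by split; apply/funext => i; case: (hall i).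
have [n [hn [h0 e]]] := often (maxn i1 i2).
case: (pref n h0 e) => h; [apply: hi1 | apply: hi2]; apply: h; lia.
Qed.

End Gauge.


Lemma sum_cvg (R : realType) (T : eqType) (r : seq T) (a : T -> R) (u : T -> nat -> R) (l : T -> R) :
  (forall y, y \in r -> u y n @[n --> \oo] --> l y) ->
  \sum_(y <- r) a y * u y n @[n --> \oo] --> \sum_(y <- r) a y * l y.
Proof.
elim: r => [|z r IH] h.
  rewrite big_nil; under eq_fun do rewrite big_nil; exact: cvg_cst.
rewrite big_cons; under eq_fun do rewrite big_cons.
apply: cvgD.
  by apply: cvgMl_tmp; apply: h; rewrite mem_head.
by apply: IH => y hy; apply: h; rewrite in_cons hy orbT.
Qed.

Lemma Dint_lem (R : realType) (s : seq R) (c : R -> rat) x : x \in s ->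
  ((\prod_(y <- s) denq (c y))%:~R : R) * ratr (c x) \is a Num.int.
Proof.
move=> hx; rewrite (big_rem x hx) /= rmorphM /= mulrAC.
have -> : ((denq (c x))%:~R : R) * ratr (c x) = (numq (c x))%:~R.
  rewrite -[in RHS](rmorph_int (@ratr R)) numqE rmorphM /= rmorph_int mulrC //.
by rewrite -rmorphM /= intr_int.
Qed.

Theorem corollary4p25 (R : realType) (Omega : Type) (I : Type)
    (Q : nat -> rat) (f : forall n : nat, ('I_n.+1 -> Omega) -> Omega) (k : nat)
    (K : I -> set R) (Rg : I -> nat -> Omega -> Omega -> R) :
  ([set: Omega] #= [set: R])%card ->
  ([set: I] #= [set: R])%card ->
  Qenum Q -> propM Q ->
  (forall n, injective (f n)) ->
  (forall a b, a <> b -> K a `&` K b = set0) ->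
  (forall a, ubiq_dense (K a)) ->
  (forall a, (K a #= [set: R])%card) ->
  (forall a, gauge_system (K a) (Rg a)) ->
  Q_lin_indep ([set 1] `|` \bigcup_(a in [set: I]) Fset Q f k (Rg a)).
Proof.
move=> _ _ [Qinj [Qge0 Qsurj]] _ hinj hdisj _ _ hgs s c us hs hsum x hx.
set others := [seq y <- s | y != 1].
have uo : uniq others by rewrite filter_uniq.
have hch : forall y : R, exists o : option (I * (nat -> Omega) * (nat -> Omega)),
   y \in others -> exists a p q, o = Some (a, p, q) /\ p <> q /\
     y = Lambda_tilde Q f k (Rg a) p q.
  move=> y; case: (pselect (y \in others)) => hy; last by exists None.
  move: (hy); rewrite mem_filter => /andP[hy1 hys].
  have [/= e|[a _ [p [q [hpq e]]]]] := hs y hys.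
    by rewrite e eqxx in hy1.
  by exists (Some (a, p, q)) => _; exists a, p, q.
have [g hg] := choice hch.
pose thr (y : R) (m : nat) : R :=
  if g y is Some (a, p, q) then tt R Omega f I Rg a p q m else 0.
have P1 : forall y, y \in others -> forall m, thr y m = 0 \/ m%:R < thr y m < m.+1%:R.
  move=> y hy m; have [a [p [q [eg _]]]] := hg y hy.
  by rewrite /thr eg; apply: (thr_range _ _ _ _ (hgs a)).
have val : forall y, y \in others ->
    y = pair_sum Q (lam R k) (Bset R (thr y)).
  move=> y hy; have [a [p [q [eg [_ e]]]]] := hg y hy.
  by rewrite {1}e /thr eg.
have P2 : forall y0, y0 \in others -> forall M, exists m, (M <= m)%N /\
    thr y0 m != 0 /\ forall y, y \in others -> y != y0 -> thr y m != thr y0 m.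
  move=> y0 hy0; have [a0 [p0 [q0 [eg0 [hpq0 e0]]]]] := hg y0 hy0.
  have [i0 hi0] : exists i0, p0 i0 <> q0 i0.
    apply: contrapT => hno; apply: hpq0; apply/funext => i.
    by apply: contrapT => hn; apply: hno; exists i.
  have nz : forall n, (i0 <= n)%N -> thr y0 (n.*2.+1) != 0.
    move=> n hn; rewrite /thr eg0 /tt !Phi_odd; apply/eqP => hz.
    have [[_ [h0 _]] _] := hgs a0 (n.*2.+1).
    move/h0/hinj/(congr1 (fun g => g (Ordinal (hn : (i0 < n.+1)%N)))): hz => /=.
    exact: hi0.
  have hsep : forall y, y \in others -> exists N, forall n, (N <= n)%N ->
      (fun y n => y != y0 -> thr y0 (n.*2.+1) != 0 ->
        thr y (n.*2.+1) != thr y0 (n.*2.+1)) y n.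
    move=> y hy; case: (eqVneq y y0) => [->|hne].
      by exists 0%N => n _ /=; rewrite eqxx.
    have [a [p [q [eg [hpq e]]]]] := hg y hy.
    have [|N hN] := sep_pair R Omega f I K Rg a0 a p0 q0 p q hinj hdisj hgs.
      move=> [ea [[ep eq]|[ep eq]]]; move/eqP: hne; apply; rewrite e e0 ea ep eq //.
      exact: (LT_sym _ _ _ _ _ _ _ _ _ (hgs a0)).
    by exists N => n hn _ /=; rewrite /thr eg eg0; exact: hN.
  have [N hN] := fin_eventually _ others _ hsep.
  move=> M; exists (maxn M (maxn N i0)).*2.+1; split; [|split].
  - lia.
  - apply: nz; lia.
  - move=> y hy hne; apply: (hN _ _ y hy hne); [lia | apply: nz; lia].
set d := fun j => \sum_(y <- others) (ratr (c y) : R) * (`[< Bset R (thr y) (Q j) >])%:R.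
set P := fun y n => \sum_(0 <= i < n | `[< Bset R (thr y) (Q i) >]) lam R k i.
have cvP : forall y, y \in others -> P y n @[n --> \oo] --> limn (P y).
  by move=> y _; exact: (psum_cvg R Q k (Bset R (thr y))).
have GE : forall n, \sum_(0 <= i < n) d i * lam R k i =
    \sum_(y <- others) ratr (c y) * P y n.
  move=> n; rewrite /d /P.
  under eq_bigr do rewrite mulr_suml.
  rewrite exchange_big /=; apply: eq_bigr => y _.
  rewrite mulr_sumr [in RHS]big_mkcond /=; apply: eq_bigr => i _.
  by case: asboolP => _; rewrite ?mulr1 ?mulr0 ?mul0r.
set Ltot := \sum_(y <- others) ratr (c y) * limn (P y).
have Gcv : \sum_(0 <= i < n) d i * lam R k i @[n --> \oo] --> Ltot.
  under eq_fun do rewrite GE.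
  exact: sum_cvg.
have e2 : \sum_(x <- s | x != 1) ratr (c x) * x = Ltot.
  rewrite -big_filter -/others; apply: eq_big_seq => y hy.
  by congr (_ * _); exact: val y hy.
set c1 := \sum_(x <- s | x == 1) ratr (c x) * x.
have hsum' : c1 + Ltot = 0.
  by move: hsum; rewrite (bigID (fun x => x == 1)) /= e2.
set D := ((\prod_(y <- s) denq (c y))%:~R : R).
have D0 : 0 < D by rewrite ltr0z; apply: prodr_gt0 => y _; exact: denq_gt0.
have Dc : forall x, x \in s -> D * ratr (c x) \is a Num.int.
  by move=> y hy; exact: Dint_lem.
have Dc1 : D * c1 \is a Num.int.
  rewrite /c1 mulr_sumr big_seq_cond; apply: rpred_sum => y /andP[hys /eqP ey].
  by rewrite mulrA rpredM ?Dc // ey rpred1.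
have Dd : forall i, D * d i \is a Num.int.
  move=> i; rewrite /d mulr_sumr big_seq; apply: rpred_sum => y hy.
  rewrite mulrA rpredM //; last by rewrite intr_nat // natr_nat.
  by apply: Dc; move: hy; rewrite mem_filter => /andP[].
set B := \sum_(y <- others) `|(ratr (c y) : R)|.
have dB : forall i, `|d i| <= B.
  move=> i; rewrite /d; apply: le_trans (ler_norm_sum _ _ _) _.
  apply: ler_sum => y _; rewrite normrM.
  by case: (`[< _ >]); rewrite /= ?normr1 ?mulr1 ?normr0 ?mulr0.
have := gap_lemma R k d c1 D B D0 Dc1 Dd dB (cvgP _ Gcv).
rewrite (cvg_lim (@Rhausdorff R) Gcv) => /(_ hsum') [N hN].
have hc0 : forall y, y \in others -> c y = 0.
  move=> y0 hy0; apply/eqP; apply: contraT => hc.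
  have [j hj hdj] := nonzero_often R others thr Q c y0 uo hy0 hc Qsurj P1 (P2 y0 hy0) N.
  by move: hdj; rewrite -/(d j) hN ?eqxx.
case: (eqVneq x 1) => [ex|hx1]; last by apply: hc0; rewrite mem_filter hx1.
have e2' : \sum_(x <- s | x != 1) ratr (c x) * x = 0 :> R.
  rewrite big_seq_cond big1 // => y /andP[hys hy1].
  by rewrite hc0 ?mem_filter ?hy1 // rmorph0 mul0r.
move: hsum; rewrite (bigID (fun x => x == 1)) /= e2' addr0 -big_filter.
have -> : [seq x <- s | x == 1] = [:: 1].
  rewrite -(filter_pred1_uniq us (x:=1)); last by rewrite -ex.
  by apply: eq_filter => y.
rewrite big_seq1 mulr1 => /eqP; rewrite fmorph_eq0 ex => /eqP.
by [].
Qed.
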